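(* Let $\kappa\in\mathbb{N}$ with $\kappa\ge2$ and let $\mathsf{A}\in\mathscr{M}_\kappa^+$, with $(a,b,c)\in\mathbb{R}^3$ such that $\mathsf{A}=\mathsf{M}_\kappa(a,b,c)$. Then $a>\max\{|b|,|c|\}$, and the functions $f(a,b,c)=\frac{b(a-c)}{a^2-b^2}$ and $g(a,b,c)=\frac{ac-b^2}{a^2-b^2}$ satisfy $|f(a,b,c)|\le2$ and $|g(a,b,c)|\le1$.
   Context: $\mathsf{M}_\kappa(a,b,c)$ is the $(1+\kappa)\times(1+\kappa)$ matrix indexed by $\{0,\dots,\kappa\}$ with $(i,j)$ entry $a$ if $i=j$, $b$ if $i\neq j$ and ($i=0$ or $j=0$), and $c$ otherwise. $\mathscr{M}_\kappa^+$ is the set of positive definite matrices of the form $\mathsf{M}_\kappa(a,b,c)$. *)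

(* Defs.v *)
From HB Require Import structures.
From mathcomp Require Import all_boot all_order all_algebra.
From mathcomp Require Import all_classical all_reals.
Set Implicit Arguments. Unset Strict Implicit. Unset Printing Implicit Defensive.
Import Order.TTheory GRing.Theory Num.Theory.
Local Open Scope ring_scope.

Definition Mk (R : ringType) (kappa : nat) (a b c : R) : 'M[R]_(kappa.+1) :=
  \matrix_(i, j) (if i == j then a
                  else if (i == ord0) || (j == ord0) then b else c).

Definition posdef (R : realFieldType) (n : nat) (A : 'M[R]_n) : Prop :=
  A^T = A /\ forall x : 'cV[R]_n, x != 0 -> 0 < (x^T *m A *m x) 0 0.

Definition Mkplus (R : realFieldType) (kappa : nat) (A : 'M[R]_(kappa.+1)) : Prop :=
  posdef A /\ exists a b c : R, A = Mk kappa a b c.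

(* Main.v *)
Require Import Defs.
From HB Require Import structures.
From mathcomp Require Import all_boot all_order all_algebra.
From mathcomp Require Import all_classical all_reals.
From mathcomp Require Import ring lra.
Import Order.TTheory GRing.Theory Num.Theory.
Local Open Scope ring_scope.

Lemma qform (R : realType) k (a b c u v w : R) :
  let x := \col_(i < k.+3) [:: u; v; w]`_i in
  (x^T *m Mk (k.+2) a b c *m x) 0 0 = a*(u^+2+v^+2+w^+2) + 2*b*(u*v+u*w) + 2*c*(v*w).
Proof.
move=> x.
have x0 : forall i : 'I_k, x (lift ord0 (lift ord0 (lift ord0 i))) 0 = 0.
  by move=> i; rewrite /x mxE /= nth_nil.
have xT : forall (j : 'I_k.+3) , (x^T *m Mk (k.+2) a b c) 0 j = 
   \sum_(i < k.+3) x i 0 * Mk k.+2 a b c i j.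
  by move=> j; rewrite mxE; apply: eq_bigr => i _; rewrite mxE.
rewrite mxE !big_ord_recl big1; last by move=> i _; rewrite x0 mulr0.
rewrite !xT !big_ord_recl !big1; try by move=> i _; rewrite x0 mul0r.
rewrite /x /Mk !mxE /=.
ring.
Qed.

Lemma qpos (R : realType) k (a b c u v w : R) :
  posdef (Mk (k.+2) a b c) -> v != 0 ->
  0 < a*(u^+2+v^+2+w^+2) + 2*b*(u*v+u*w) + 2*c*(v*w).
Proof.
move=> [_ P] v0; rewrite -(qform R k); apply: P.
apply/negP => /eqP h.
have := congr1 (fun m : 'cV[R]_(k.+3) => m (lift ord0 ord0) 0) h.
by rewrite !mxE /=; apply/eqP.
Qed.

Theorem lemma4p8 (R : realType) (kappa : nat) (A : 'M[R]_(kappa.+1)) (a b c : R) :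
  (2 <= kappa)%N -> Mkplus A -> A = Mk kappa a b c ->
  Num.max `|b| `|c| < a /\
  `| b * (a - c) / (a ^+ 2 - b ^+ 2) | <= 2 /\
  `| (a * c - b ^+ 2) / (a ^+ 2 - b ^+ 2) | <= 1.
Proof.
case: kappa A => [|[|k]] A //= _ [PD _] HA; subst A.
have q := fun u v w => @qpos R k a b c u v w PD.
have h1 := q 0 1 0 (oner_neq0 _).
have h2 := q 0 1 1 (oner_neq0 _).
have h3 := q 0 1 (-1) (oner_neq0 _).
have h4 := q 1 1 0 (oner_neq0 _).
have h5 := q (-1) 1 0 (oner_neq0 _).
have ha : 0 < a by nra.
have h6 := q (-(2*b)) a a (lt0r_neq0 ha).
have hac : -a < c < a by apply/andP; split; nra.
have hab : -a < b < a by apply/andP; split; nra.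
have key : 2 * b^+2 < a * (a + c) by nra.
have d0 : 0 < a^+2 - b^+2 by nra.
split; first by rewrite gt_max !ltr_norml hab hac.
split; rewrite normrM normfV (gtr0_norm d0) ler_pdivrMr //.
  rewrite normrM (gtr0_norm (_ : 0 < a - c)); last by lra.
  case: (lerP 0 b) => hb.
    by rewrite ger0_norm //; nra.
  by rewrite ltr0_norm //; nra.
rewrite ler_norml; apply/andP; split; nra.
Qed.
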